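(* For $k,\ell\in\mathbb Z_{\ge0}$, $$p_c^{(k-2\ell;k)}(t)=\sum_{m=0}^k\frac1{2^m}k^{\underline m}K_m(\ell;k)t^m,\qquad p_c^{(2k-\ell;\ell)}(t)=\sum_{m=0}^{\ell}\frac{(-1)^m}{2^m}\ell^{\underline m}K_m(k;\ell)t^m.$$
   Context: $r^{\underline m}=r(r-1)\cdots(r-m+1)$, $r^{\overline m}=r(r+1)\cdots(r+m-1)$. Binomial coefficients: $\binom am=a(a-1)\cdots(a-m+1)/m!$ for $m\in\mathbb Z_{\ge1}$, $\binom a0=1$, and $\binom am=0$ for negative integers $m$. Binary Krawtchouk polynomials: $K_m(x;y)=\sum_{j=0}^m(-1)^j\binom xj\binom{y-x}{m-j}$. Cayley continuants $\mathrm{Cay}_m(x;y)=\sum_{j=0}^m\binom mj(\frac{x+y}2)^{\underline j}(\frac{x-y}2)^{\overline{m-j}}$. $p_c^{(s;k)}(t)=\sum_{m=0}^k\frac1{2^m}\binom km\mathrm{Cay}_m(s;k)t^m$ for $s\in\mathbb C$, $k\in\mathbb Z_{\ge0}$. *)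

(* Defs.v *)
(* Polynomials in t are elements of {poly R}, R any
   numFieldType (characteristic 0 field containing Q; C is an instance). *)
From HB Require Import structures.
From mathcomp Require Import all_boot all_order all_algebra.
Set Implicit Arguments. Unset Strict Implicit. Unset Printing Implicit Defensive.
Import Order.TTheory GRing.Theory Num.Theory.
Local Open Scope ring_scope.

Definition falling {R : numFieldType} (r : R) (m : nat) : R :=
  \prod_(i < m) (r - i%:R).

Definition rising {R : numFieldType} (r : R) (m : nat) : R :=
  \prod_(i < m) (r + i%:R).

Definition gbinom {R : numFieldType} (a : R) (m : nat) : R :=
  falling a m / (m`!)%:R.

Definition kraw {R : numFieldType} (m : nat) (x y : R) : R :=
  \sum_(j < m.+1) (-1) ^+ j * gbinom x j * gbinom (y - x) (m - j).

Definition cay {R : numFieldType} (m : nat) (x y : R) : R :=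
  \sum_(j < m.+1) ('C(m, j))%:R * falling ((x + y) / 2) j
                    * rising ((x - y) / 2) (m - j).

Definition pc {R : numFieldType} (s : R) (k : nat) : {poly R} :=
  \poly_(m < k.+1) ((2 ^+ m)^-1 * ('C(k, m))%:R * cay m s k%:R).

(* Main.v *)
Require Import Defs.
From HB Require Import structures.
From mathcomp Require Import all_boot all_order all_algebra.
From mathcomp Require Import ring.
Import Order.TTheory GRing.Theory Num.Theory.
Local Open Scope ring_scope.

Section H.
Variable R : numFieldType.

Lemma rising_neg (b : R) n : rising (- b) n = (-1) ^+ n * falling b n.
Proof.
rewrite /rising /falling; elim: n => [|n IH]; first by rewrite !big_ord0 expr0 mul1r.
by rewrite !big_ord_recr /= IH exprS; ring.
Qed.

Lemma falling_gb (a : R) j : falling a j = (j`!)%:R * gbinom a j.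
Proof.
rewrite /gbinom mulrC -mulrA mulVf ?mulr1 //.
by rewrite pnatr_eq0 -lt0n fact_gt0.
Qed.

Lemma falling_nat k m : (m <= k)%N -> falling (k%:R : R) m = (k ^_ m)%:R.
Proof.
move=> hm; rewrite /falling ffact_prod natr_prod; apply: eq_bigr => i _.
by rewrite natrB // ltnW // (leq_trans (ltn_ord i) hm).
Qed.

Lemma rev_sum (F : nat -> nat -> R) m :
  \sum_(j < m.+1) F j (m - j)%N = \sum_(j < m.+1) F (m - j)%N j.
Proof.
rewrite (reindex_inj rev_ord_inj) /=; apply: eq_bigr => j _.
by rewrite subSS subKn // -ltnS.
Qed.

Lemma cay_gen (x y A B : R) m : (x + y) / 2 = A -> (x - y) / 2 = - B ->
  cay m x y = (m`!)%:R * \sum_(j < m.+1) (-1) ^+ (m - j) * gbinom A j * gbinom B (m - j).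
Proof.
move=> hA hB; rewrite /cay hA hB mulr_sumr; apply: eq_bigr => j _.
have hj : (j <= m)%N by rewrite -ltnS.
rewrite rising_neg !falling_gb -(bin_fact hj) !natrM; ring.
Qed.

End H.

Theorem corollary7p3 (R : numFieldType) (k l : nat) :
  pc (k%:R - 2 * l%:R : R) k =
    \poly_(m < k.+1) ((2 ^+ m)^-1 * falling (k%:R : R) m * kraw m (l%:R : R) k%:R)
  /\
  pc (2 * k%:R - l%:R : R) l =
    \poly_(m < l.+1) ((-1) ^+ m * (2 ^+ m)^-1 * falling (l%:R : R) m
                        * kraw m (k%:R : R) l%:R).
Proof.
split; apply: eq_poly => m hm; rewrite ltnS in hm.
- rewrite (@cay_gen R _ _ (k%:R - l%:R) l%:R); last first.
  + by field.
  + by field.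
  rewrite falling_nat // -bin_ffact natrM /kraw.
  rewrite (@rev_sum R (fun a b => (-1) ^+ b * gbinom (k%:R - l%:R : R) a * gbinom (l%:R : R) b)).
  rewrite !mulrA; congr (_ * _); apply: eq_bigr => j _.
  ring.
- rewrite (@cay_gen R _ _ k%:R (l%:R - k%:R)); last first.
  + by field.
  + by field.
  rewrite falling_nat // -bin_ffact natrM /kraw !mulrA !mulr_sumr.
  apply: eq_bigr => -[j hj'] _ /=.
  have hj : (j <= m)%N by rewrite -ltnS.
  have e : (-1) ^+ (m - j) = (-1) ^+ m * ((-1) ^+ j : R).
    by rewrite -[in RHS](subnK hj) exprD -mulrA -exprD addnn -mul2n exprM sqrrN expr1n expr1n mulr1.
  rewrite e; ring.
Qed.
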